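(* Let $A=(A,\wedge,\vee,\cdot,\to,1)$ be a $\mathsf{DLCMI}$ whose lattice reduct has a least element $0$, let $n$ be a natural number, and let $\gamma:A\to A$ be a function. Then $\gamma$ satisfies, for all $a,b\in A$, (g1) $a\vee\neg(\gamma(a))^n\le\gamma(a)$ and (g2) $\gamma(a)\le a\vee\neg b^n\vee b$ (equivalently, $\gamma(a)=\min\{b\in A: a\vee\neg b^n\le b\}$ for all $a$), if and only if $\gamma$ satisfies, for all $a,b\in A$, (g3) $\neg(\gamma(0))^n\le\gamma(0)$, (g4) $\gamma(0)\le b\vee\neg b^n$, and (g5) $\gamma(a)=a\vee\gamma(0)$. In particular such a function $\gamma$ is a polynomial function on $A$.
   Context: An algebra $(A,\wedge,\vee,\cdot,\to,1)$ of type $(2,2,2,2,0)$ is a $\mathsf{DLCMI}$ if for all $a,b,c\in A$: (1) $(A,\wedge,\vee)$ is a distributive lattice; (2) $1$ is its largest element; (3) $(A,\cdot,1)$ is a commutative monoid; (4) $(a\to b)\wedge(a\to c)=a\to(b\wedge c)$; (5) $(a\to c)\wedge(b\to c)=(a\vee b)\to c$; (6) $a\to a=1$; (7) $(a\vee b)\cdot c=(a\cdot c)\vee(b\cdot c)$; (8) $(a\to b)\cdot(b\to c)\le a\to c$; (9) $a\to b\le (a\cdot c)\to(b\cdot c)$. Notation: $\neg x=x\to 0$; $x^0=1$, $x^m=x\cdot x^{m-1}$. *)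

(* Defs.v *)
From mathcomp Require Import all_boot all_order.
Set Implicit Arguments. Unset Strict Implicit. Unset Printing Implicit Defensive.
Import Order.Theory.
Local Open Scope order_scope.

(* A DLCMI whose lattice reduct is bounded: the distributive lattice with top
   1 (= \top) and least element 0 (= \bot) is the mathcomp structure
   [tbDistrLatticeType]; the monoid product [mul] and implication [imp] are
   extra operations satisfying axioms (3)-(9). *)
Definition is_DLCMI (d : Order.disp_t) (A : tbDistrLatticeType d)
    (mul imp : A -> A -> A) : Prop :=
  (   (* (3) commutative monoid with unit 1 = \top *)
      (forall a b c : A, mul a (mul b c) = mul (mul a b) c) /\
      (forall a b : A, mul a b = mul b a) /\
      (forall a : A, mul \top a = a) /\
      (* (4) *) (forall a b c : A, imp a b `&` imp a c = imp a (b `&` c)) /\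
      (* (5) *) (forall a b c : A, imp a c `&` imp b c = imp (a `|` b) c) /\
      (* (6) *) (forall a : A, imp a a = \top) /\
      (* (7) *) (forall a b c : A, mul (a `|` b) c = mul a c `|` mul b c) /\
      (* (8) *) (forall a b c : A, mul (imp a b) (imp b c) <= imp a c)
    /\ (* (9) *) (forall a b c : A, imp a b <= imp (mul a c) (mul b c))).

Fixpoint mpow (d : Order.disp_t) (A : tbDistrLatticeType d)
    (mul : A -> A -> A) (x : A) (m : nat) : A :=
  match m with
  | 0 => \top
  | m'.+1 => mul x (mpow mul x m')
  end.

Definition lneg (d : Order.disp_t) (A : tbDistrLatticeType d)
    (imp : A -> A -> A) (x : A) : A := imp x \bot.

(* Main.v *)
Require Import Defs.
From mathcomp Require Import all_boot all_order.
Import Order.Theory.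
Local Open Scope order_scope.
Set Implicit Arguments.

Lemma mul_monol (d : Order.disp_t) (A : tbDistrLatticeType d)
    (mul imp : A -> A -> A) (HA : is_DLCMI mul imp) (x x' y : A) :
  x <= x' -> mul x y <= mul x' y.
Proof.
case: HA => _ [_ [_ [_ [_ [_ [H7 _]]]]]] Hx.
have -> : x' = x `|` x' by apply/esym/join_r.
by rewrite H7 leUl.
Qed.

Lemma mpow_mono (d : Order.disp_t) (A : tbDistrLatticeType d)
    (mul imp : A -> A -> A) (HA : is_DLCMI mul imp) (x x' : A) n :
  x <= x' -> mpow mul x n <= mpow mul x' n.
Proof.
move=> Hx; elim: n => [|n IH] //=.
have HC := HA; case: HC => _ [HC _].
apply: (@le_trans _ _ (mul x' (mpow mul x n))); first exact: mul_monol HA _ _ _ Hx.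
rewrite HC [mul x' (mpow mul x' n)]HC; exact: mul_monol HA _ _ _ IH.
Qed.

Lemma lneg_anti (d : Order.disp_t) (A : tbDistrLatticeType d)
    (mul imp : A -> A -> A) (HA : is_DLCMI mul imp) (x x' : A) :
  x <= x' -> lneg imp x' <= lneg imp x.
Proof.
case: HA => _ [_ [_ [_ [H5 _]]]] Hx; rewrite /lneg.
have -> : x' = x `|` x' by apply/esym/join_r.
by rewrite -H5 leIl.
Qed.

Unset Implicit Arguments.
Theorem lemma4p11 (d : Order.disp_t) (A : tbDistrLatticeType d)
    (mul imp : A -> A -> A) (HA : is_DLCMI mul imp)
    (n : nat) (gamma : A -> A) :
  ((forall a b : A,
       a `|` lneg imp (mpow mul (gamma a) n) <= gamma a /\
       gamma a <= a `|` lneg imp (mpow mul b n) `|` b)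
   <->
   (forall a b : A,
       [/\ lneg imp (mpow mul (gamma \bot) n) <= gamma \bot,
           gamma \bot <= b `|` lneg imp (mpow mul b n)
         & gamma a = a `|` gamma \bot]))
  /\
  ((forall a b : A,
       a `|` lneg imp (mpow mul (gamma a) n) <= gamma a /\
       gamma a <= a `|` lneg imp (mpow mul b n) `|` b) ->
   exists c : A, forall a : A, gamma a = a `|` c).
Proof.
have fwd : (forall a b : A,
       a `|` lneg imp (mpow mul (gamma a) n) <= gamma a /\
       gamma a <= a `|` lneg imp (mpow mul b n) `|` b) ->
   (forall a b : A,
       [/\ lneg imp (mpow mul (gamma \bot) n) <= gamma \bot,
           gamma \bot <= b `|` lneg imp (mpow mul b n)
         & gamma a = a `|` gamma \bot]).
  move=> H a b.
  have g1 : forall x, x `|` lneg imp (mpow mul (gamma x) n) <= gamma x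
    by move=> x; case: (H x x).
  have g2 : forall x y, gamma x <= x `|` lneg imp (mpow mul y n) `|` y
    by move=> x y; case: (H x y).
  have g0 : lneg imp (mpow mul (gamma \bot) n) <= gamma \bot.
    by have := g1 \bot; rewrite leUx => /andP[].
  have g4 : forall y, gamma \bot <= y `|` lneg imp (mpow mul y n).
    by move=> y; have := g2 \bot y; rewrite join0x joinC.
  split=> //.
  apply/le_anti/andP; split.
    apply: le_trans (g2 a (gamma \bot)) _.
    by rewrite -joinA leU2 // leUx g0 lexx.
  have := g1 a; rewrite leUx => /andP[Ha Hn].
  rewrite leUx Ha /=; apply: le_trans (g4 (gamma a)) _.
  by rewrite leUx lexx Hn.
split; last first.
  by move=> H; exists (gamma \bot) => a; case: (fwd H a a).
split=> // H a b.
case: (H a b) => g3 g4 g5.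
rewrite g5; split.
  rewrite leUx leUl /=.
  apply: (le_trans _ (le_trans g3 (leUr _ _))).
  apply: (lneg_anti HA); apply: (mpow_mono HA); exact: leUr.
rewrite -!joinA leU2 //.
by rewrite joinC.
Qed.
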